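(* Let $A,B\subset\mathbb R^n$ with $\dim_H(A\times B)<n$, let $M_2>M_1>0$, and let $f: B\times\mathbb R^n\to\mathbb R^n$ satisfy $\|f(x,t)-f(y,t)\|\le M_1\|x-y\|$ and $\|f(x,t)-f(x,t')\|\le M_1\|t-t'\|$ for all $x,y\in B$, $t,t'\in\mathbb R^n$. Then the set $\Delta=\{t\in\mathbb R^n:\ (M_2t+f(B,t))\cap A\ne\varnothing\}$ has Lebesgue measure zero in $\mathbb R^n$, where $M_2t+f(B,t)=\{M_2t+f(x,t): x\in B\}$.
   Context: $\dim_H$ denotes Hausdorff dimension. *)

(* Defs.v *)
(* classical reals.  Points of R^m are represented as
   functions nat -> R of which only the coordinates i < m are relevant;
   every notion below only inspects those coordinates. *)
From Stdlib Require Import Reals.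
Open Scope R_scope.

Fixpoint sumR (m : nat) (g : nat -> R) : R :=
  match m with O => 0 | S k => sumR k g + g k end.

Fixpoint prodR (m : nat) (g : nat -> R) : R :=
  match m with O => 1 | S k => prodR k g * g k end.

Definition edist (m : nat) (x y : nat -> R) : R :=
  sqrt (sumR m (fun i => (x i - y i) ^ 2)).

Definition lebesgue_null (m : nat) (E : (nat -> R) -> Prop) : Prop :=
  forall eps : R, 0 < eps ->
  exists a b : nat -> nat -> R,
    (forall k i, (i < m)%nat -> a k i <= b k i) /\
    (forall x, E x -> exists k, forall i, (i < m)%nat -> a k i <= x i <= b k i) /\
    (forall N, sum_f_R0 (fun k => prodR m (fun i => b k i - a k i)) N <= eps).

(* s-dimensional Hausdorff measure zero in R^m (s > 0):
   H^s(E) = lim_{delta->0} H^s_delta(E) = 0, i.e. for every delta > 0 and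
   eps > 0 there is a countable cover (U_k) with diam U_k <= r_k <= delta
   and sum r_k^s <= eps. *)
Definition hausdorff_null (m : nat) (s : R) (E : (nat -> R) -> Prop) : Prop :=
  forall delta eps : R, 0 < delta -> 0 < eps ->
  exists (U : nat -> (nat -> R) -> Prop) (r : nat -> R),
    (forall k, 0 < r k <= delta) /\
    (forall k x y, U k x -> U k y -> edist m x y <= r k) /\
    (forall x, E x -> exists k, U k x) /\
    (forall N, sum_f_R0 (fun k => Rpower (r k) s) N <= eps).

(* dim_H E < d  iff  H^s(E) = 0 for some 0 < s < d
   (dim_H E = inf {s >= 0 | H^s(E) = 0}). *)
Definition dimH_lt (m : nat) (E : (nat -> R) -> Prop) (d : R) : Prop :=
  exists s : R, 0 < s < d /\ hausdorff_null m s E.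

Definition prod_set (n : nat) (A B : (nat -> R) -> Prop) : (nat -> R) -> Prop :=
  fun z => exists a b, A a /\ B b /\
    forall i, (i < n)%nat -> z i = a i /\ z (n + i)%nat = b i.

Definition Delta_set (n : nat) (A B : (nat -> R) -> Prop) (M2 : R)
  (f : (nat -> R) -> (nat -> R) -> (nat -> R)) : (nat -> R) -> Prop :=
  fun t => exists x a, B x /\ A a /\
    forall i, (i < n)%nat -> a i = M2 * t i + f x t i.

(* Main.v *)
Require Import Defs.
From Stdlib Require Import Reals.
From Stdlib Require Import Lra Lia Psatz ClassicalEpsilon.
Open Scope R_scope.

Lemma sumR_le m g h : (forall i, (i < m)%nat -> g i <= h i) -> sumR m g <= sumR m h.
Proof. induction m; simpl; intros H. lra. assert (g m <= h m) by (apply H; lia).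
  assert (sumR m g <= sumR m h) by (apply IHm; intros; apply H; lia). lra. Qed.

Lemma sumR_ext m g h : (forall i, (i < m)%nat -> g i = h i) -> sumR m g = sumR m h.
Proof. induction m; simpl; intros H. lra. rewrite (H m) by lia.
  rewrite IHm by (intros; apply H; lia). lra. Qed.

Lemma sumR_plus m g h : sumR m (fun i => g i + h i) = sumR m g + sumR m h.
Proof. induction m; simpl. lra. rewrite IHm. lra. Qed.

Lemma sumR_scal m c g : sumR m (fun i => c * g i) = c * sumR m g.
Proof. induction m; simpl. lra. rewrite IHm. lra. Qed.

Lemma sumR_nonneg m g : (forall i, (i < m)%nat -> 0 <= g i) -> 0 <= sumR m g.
Proof. induction m; simpl; intros H. lra. assert (0 <= g m) by (apply H; lia).
  assert (0 <= sumR m g) by (apply IHm; intros; apply H; lia). lra. Qed.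

Lemma sumR_term m g i : (forall j, (j < m)%nat -> 0 <= g j) -> (i < m)%nat -> g i <= sumR m g.
Proof. induction m; simpl; intros H Hi. lia.
  destruct (Nat.eq_dec i m) as [->|Hne].
  - assert (0 <= sumR m g) by (apply sumR_nonneg; intros; apply H; lia). lra.
  - assert (g i <= sumR m g) by (apply IHm; [intros; apply H; lia| lia]).
    assert (0 <= g m) by (apply H; lia). lra. Qed.

Lemma sumR_split n m g : sumR (n + m) g = sumR n g + sumR m (fun i => g (n + i)%nat).
Proof. induction m; simpl. rewrite Nat.add_0_r. lra.
  rewrite Nat.add_succ_r. simpl. rewrite IHm. lra. Qed.

Lemma prodR_const m c : prodR m (fun _ => c) = c ^ m.
Proof. induction m; simpl. lra. rewrite IHm. ring. Qed.

Lemma sum_scal_le (X Y : nat -> R) C N : (forall k, X k <= C * Y k) ->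
  sum_f_R0 X N <= C * sum_f_R0 Y N.
Proof. intros H. induction N; simpl. apply H. specialize (H (S N)). lra. Qed.

Definition Q m (x y : nat -> R) := sumR m (fun i => (x i - y i) ^ 2).

Lemma Q_nonneg m x y : 0 <= Q m x y.
Proof. apply sumR_nonneg. intros. apply pow2_ge_0. Qed.

Lemma edist_Q m x y : edist m x y = sqrt (Q m x y).
Proof. reflexivity. Qed.

Lemma coord_le m x y i : (i < m)%nat -> Rabs (x i - y i) <= edist m x y.
Proof. intros Hi. rewrite <- sqrt_Rsqr_abs. apply sqrt_le_1_alt.
  unfold Rsqr. replace ((x i - y i) * (x i - y i)) with ((x i - y i)^2) by ring.
  apply (sumR_term m (fun i => (x i - y i)^2)); auto. intros; apply pow2_ge_0. Qed.

Lemma sq_of_edist m m' x y x' y' c : 0 <= c ->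
  edist m x y <= c * edist m' x' y' -> Q m x y <= c^2 * Q m' x' y'.
Proof. intros Hc H. rewrite !edist_Q in H.
  pose proof (Q_nonneg m x y). pose proof (Q_nonneg m' x' y').
  pose proof (sqrt_sqrt _ H0). pose proof (sqrt_sqrt _ H1).
  pose proof (sqrt_pos (Q m x y)). pose proof (sqrt_pos (Q m' x' y')).
  nra. Qed.

Lemma titu (M1 M2 v q p : R) : 0 < M1 -> M1 < M2 ->
  (v - q - p)^2 <= (M2 / M1) * p^2 + 2 * (M2 / (M2 - M1)) * (v^2 + q^2).
Proof. intros H1 H2. assert (Hw : (v-q)^2 <= 2 * (v^2+q^2)) by (pose proof (pow2_ge_0 (v+q)); nra).
  replace (v - q - p) with ((v - q) - p) by ring. generalize dependent (v - q). intros w Hw.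
  assert (Hm : 0 < M2 / (M2 - M1)) by (apply Rdiv_lt_0_compat; lra).
  assert (Ht : (w - p)^2 <= (M2/M1) * p^2 + (M2/(M2-M1)) * w^2).
  { assert (E : (M2/M1) * p^2 + (M2/(M2-M1)) * w^2 - (w - p)^2
              = ((M2 - M1) * p + M1 * w)^2 / (M1 * (M2 - M1))) by (field; lra).
    assert (0 <= ((M2 - M1) * p + M1 * w)^2 / (M1 * (M2 - M1))).
    { unfold Rdiv; apply Rmult_le_pos. apply pow2_ge_0. apply Rlt_le, Rinv_0_lt_compat. nra. } lra. }
  nra. Qed.

Lemma lip n (B : (nat -> R) -> Prop) M1 M2 (f : (nat -> R) -> (nat -> R) -> (nat -> R)) :
  0 < M1 -> M1 < M2 ->
  (forall x y t, B x -> B y -> edist n (f x t) (f y t) <= M1 * edist n x y) ->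
  (forall x t t', B x -> edist n (f x t) (f x t') <= M1 * edist n t t') ->
  forall x x' a a' t t', B x -> B x' ->
  (forall i, (i < n)%nat -> a i = M2 * t i + f x t i) ->
  (forall i, (i < n)%nat -> a' i = M2 * t' i + f x' t' i) ->
  Q n t t' <= 2 * (1 + M1^2) / (M2 - M1)^2 * (Q n a a' + Q n x x').
Proof.
  intros HM1 HM2 HL1 HL2 x x' a a' t t' Bx Bx' Ha Ha'.
  assert (Hp : Q n (f x t) (f x t') <= M1^2 * Q n t t')
    by (apply sq_of_edist; [lra | apply HL2; auto]).
  assert (Hq : Q n (f x t') (f x' t') <= M1^2 * Q n x x')
    by (apply sq_of_edist; [lra | apply HL1; auto]).
  assert (Hs : M2^2 * Q n t t' <= (M2 / M1) * Q n (f x t) (f x t')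
            + 2 * (M2 / (M2 - M1)) * (Q n a a' + Q n (f x t') (f x' t'))).
  { unfold Q. rewrite <- sumR_scal, <- sumR_scal, <- sumR_plus, <- sumR_scal, <- sumR_plus.
    apply sumR_le. intros i Hi.
    replace (M2^2 * (t i - t' i)^2) with
      (((a i - a' i) - (f x t' i - f x' t' i) - (f x t i - f x t' i))^2)
      by (rewrite (Ha i Hi), (Ha' i Hi); ring).
    apply titu; auto. }
  pose proof (Q_nonneg n t t'). pose proof (Q_nonneg n a a'). pose proof (Q_nonneg n x x').
  assert (HD : 0 < M2 - M1) by lra.
  assert (Hm : 0 < M2 / (M2 - M1)) by (apply Rdiv_lt_0_compat; lra).
  assert (Hk : M2 * (M2 - M1) * Q n t t' <= 2 * (M2 / (M2 - M1)) * (1 + M1^2) * (Q n a a' + Q n x x')).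
  { assert (E : (M2 / M1) * (M1^2 * Q n t t') = M2 * M1 * Q n t t') by (field; lra).
    assert ((M2 / M1) * Q n (f x t) (f x t') <= (M2/M1) * (M1^2 * Q n t t')).
    { apply Rmult_le_compat_l; [apply Rlt_le, Rdiv_lt_0_compat; lra | auto]. }
    assert (2 * (M2 / (M2 - M1)) * (Q n a a' + Q n (f x t') (f x' t'))
            <= 2 * (M2 / (M2 - M1)) * (Q n a a' + M1^2 * Q n x x')).
    { apply Rmult_le_compat_l; lra. }
    assert (2 * (M2 / (M2 - M1)) * (Q n a a' + M1^2 * Q n x x')
            <= 2 * (M2 / (M2 - M1)) * (1 + M1^2) * (Q n a a' + Q n x x')).
    { replace (2 * (M2 / (M2 - M1)) * (1 + M1^2) * (Q n a a' + Q n x x'))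
      with (2 * (M2 / (M2 - M1)) * ((1 + M1^2) * (Q n a a' + Q n x x'))) by ring.
      apply Rmult_le_compat_l. lra. pose proof (pow2_ge_0 M1). nra. }
    nra. }
  apply (Rmult_le_reg_l (M2 * (M2 - M1))). nra.
  replace (M2 * (M2 - M1) * (2 * (1 + M1 ^ 2) / (M2 - M1) ^ 2 * (Q n a a' + Q n x x')))
    with (2 * (M2 / (M2 - M1)) * (1 + M1^2) * (Q n a a' + Q n x x')) by (field; lra).
  exact Hk.
Qed.

Lemma prodR_ext m g h : (forall i, (i < m)%nat -> g i = h i) -> prodR m g = prodR m h.
Proof. induction m; simpl; intros H. lra. rewrite (H m) by lia.
  rewrite IHm by (intros; apply H; lia). lra. Qed.

Lemma pow_le_Rpower (r s : R) (n : nat) : 0 < r <= 1 -> s <= INR n -> r ^ n <= Rpower r s.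
Proof. intros [H0 H1] Hs. rewrite <- Rpower_pow by auto. unfold Rpower.
  assert (ln r <= 0).
  { destruct (Req_dec r 1) as [->|Hne]. rewrite ln_1; lra.
    rewrite <- ln_1. left. apply ln_increasing; lra. }
  destruct (Req_dec (INR n * ln r) (s * ln r)) as [E|E]. rewrite E; lra.
  left. apply exp_increasing. nra. Qed.

Theorem mainTheorem4 (n : nat) (A B : (nat -> R) -> Prop) (M1 M2 : R)
  (f : (nat -> R) -> (nat -> R) -> (nat -> R)) :
  dimH_lt (2 * n) (prod_set n A B) (INR n) ->
  0 < M1 -> M1 < M2 ->
  (forall x y t, B x -> B y -> edist n (f x t) (f y t) <= M1 * edist n x y) ->
  (forall x t t', B x -> edist n (f x t) (f x t') <= M1 * edist n t t') ->
  lebesgue_null n (Delta_set n A B M2 f).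
Proof.
  intros [s [[Hs0 Hsn] HN]] HM1 HM2 HL1 HL2 eps Heps.
  set (K := 2 * (1 + M1^2) / (M2 - M1)^2).
  assert (HK : 0 < K).
  { unfold K. apply Rdiv_lt_0_compat. pose proof (pow2_ge_0 M1). lra.
    apply pow_lt; lra. }
  set (L := sqrt K).
  assert (HL : 0 < L) by (apply sqrt_lt_R0; auto).
  set (c := 2 * L).
  assert (Hc : 0 < c) by (unfold c; lra).
  assert (Hcn : 0 < c ^ n) by (apply pow_lt; auto).
  destruct (HN 1 (eps / c ^ n) Rlt_0_1 (Rdiv_lt_0_compat _ _ Heps Hcn))
    as [U [r [Hr [Hd [Hcov Hsum]]]]].
  set (V := fun k (t : nat -> R) => exists z x a, U k z /\ B x /\ A a /\
      (forall i, (i < n)%nat -> z i = a i /\ z (n + i)%nat = x i) /\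
      (forall i, (i < n)%nat -> a i = M2 * t i + f x t i)).
  assert (Hdiam : forall k t t', V k t -> V k t' -> forall i, (i < n)%nat ->
            Rabs (t i - t' i) <= L * r k).
  { intros k t t' [z [x [a [Uz [Bx [Aa [Hz Ht]]]]]]] [z' [x' [a' [Uz' [Bx' [Aa' [Hz' Ht']]]]]]] i Hi.
    eapply Rle_trans. apply (coord_le n); auto.
    rewrite edist_Q.
    pose proof (lip n B M1 M2 f HM1 HM2 HL1 HL2 x x' a a' t t' Bx Bx' Ht Ht') as Hlip.
    fold K in Hlip.
    assert (Hsplit : Q n a a' + Q n x x' <= Q (2 * n) z z').
    { unfold Q. replace (2 * n)%nat with (n + n)%nat by lia. rewrite sumR_split.
      right. f_equal; apply sumR_ext; intros j Hj; destruct (Hz j Hj), (Hz' j Hj); congruence. }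
    pose proof (Hd k z z' Uz Uz') as Hdz. rewrite edist_Q in Hdz.
    eapply Rle_trans. apply sqrt_le_1_alt. apply Hlip.
    rewrite sqrt_mult by (lra || (pose proof (Q_nonneg n a a'); pose proof (Q_nonneg n x x'); lra)).
    fold L. apply Rmult_le_compat_l. lra.
    eapply Rle_trans. apply sqrt_le_1_alt. apply Hsplit. exact Hdz. }
  set (ctr := fun k => epsilon (inhabits (fun _ : nat => 0)) (V k)).
  assert (Hrk : forall k, 0 <= L * r k) by (intro k; destruct (Hr k); nra).
  exists (fun k i => ctr k i - L * r k), (fun k i => ctr k i + L * r k).
  split; [|split].
  - intros k i _. specialize (Hrk k). lra.
  - intros t [x [a [Bx [Aa Ht]]]].
    set (z := fun i => if (i <? n)%nat then a i else x (i - n)%nat).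
    assert (Pz : prod_set n A B z).
    { exists a, x. split; [|split]; auto. intros i Hi. unfold z. split.
      - apply Nat.ltb_lt in Hi. now rewrite Hi.
      - assert (E : (n + i <? n)%nat = false) by (apply Nat.ltb_ge; lia). rewrite E.
        f_equal. lia. }
    destruct (Hcov z Pz) as [k Uk].
    assert (Vt : V k t).
    { exists z, x, a. split; [exact Uk|]. split; [exact Bx|]. split; [exact Aa|].
      split; [|exact Ht]. destruct Pz as [a0 [x0 [_ [_ Hp]]]].
      intros i Hi. unfold z. split.
      - apply Nat.ltb_lt in Hi. now rewrite Hi.
      - assert (E : (n + i <? n)%nat = false) by (apply Nat.ltb_ge; lia). rewrite E.
        f_equal. lia. }
    exists k. intros i Hi.
    assert (Vc : V k (ctr k)) by (apply epsilon_spec; eauto).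
    pose proof (Hdiam k t (ctr k) Vt Vc i Hi) as Hb. apply Rabs_le_between' in Hb || idtac.
    unfold Rabs in Hb. destruct Rcase_abs in Hb; lra.
  - intros N. eapply Rle_trans.
    + apply (sum_scal_le _ (fun k => Rpower (r k) s) (c ^ n)).
      intros k. rewrite (prodR_ext n _ (fun _ => c * r k)).
      2:{ intros i _. unfold c. ring. }
      rewrite prodR_const, Rpow_mult_distr. apply Rmult_le_compat_l. lra.
      apply pow_le_Rpower; auto. lra.
    + replace eps with (c ^ n * (eps / c ^ n)) by (field; lra).
      apply Rmult_le_compat_l. lra. apply Hsum.
Qed.
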